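(* Let $1\le r\le n$ and let $\mathcal{A}$ be a family of $r$-element subsets of $[n]$. Define $m:\mathcal{A}\to\mathbb{R}$ by: $m(A)=n/r$ if $A$ is contained in some matching of $\lfloor n/r\rfloor$ sets from $\mathcal{A}$, and otherwise $m(A)$ is the size of the largest matching of sets from $\mathcal{A}$ that contains $A$. Then \[ \sum_{A\in\mathcal{A}} \frac{1}{m(A)} \le \binom{n-1}{r-1}. \]
   Context: A matching is a collection of pairwise disjoint sets. $[n]=\{1,\dots,n\}$. *)

(* Defs.v *)
From mathcomp Require Import all_boot all_order all_algebra.
Set Implicit Arguments. Unset Strict Implicit. Unset Printing Implicit Defensive.
Import Order.TTheory GRing.Theory Num.Theory.

Definition is_matching (T : finType) (M : {set {set T}}) : bool :=
  [forall B in M, forall C in M, (B != C) ==> [disjoint B & C]].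

Definition max_matching_containing (T : finType) (F : {set {set T}}) (A : {set T}) : nat :=
  \max_(M in powerset F | is_matching M && (A \in M)) #|M|.

Definition mweight (R : realFieldType) (n r : nat) (F : {set {set 'I_n}}) (A : {set 'I_n}) : R :=
  if [exists M in powerset F, [&& is_matching M, A \in M & #|M| == n %/ r]]
  then (n%:R / r%:R)%R
  else ((max_matching_containing F A)%:R)%R.

Arguments mweight R n r F A : clear implicits.

(* Main.v *)
Require Import Defs.
From mathcomp Require Import all_boot all_order all_algebra.
From mathcomp Require Import zify fingroup perm.
Import Order.TTheory GRing.Theory Num.Theory.
Set Implicit Arguments. Unset Strict Implicit. Unset Printing Implicit Defensive.

Definition memT n (T : {set 'I_n}) (z : nat) : bool :=
  [exists z' : 'I_n, (val z' == z) && (z' \in T)].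
Definition gT n (T : {set 'I_n}) (x : nat) : nat := \sum_(0 <= z < x) ~~ memT T z.
Definition phiT n (d : nat) (T : {set 'I_n}) (x : nat) : nat := x - minn (gT T x) d.

Lemma memT_ord n (T : {set 'I_n}) (x : 'I_n) : memT T x = (x \in T).
Proof.
apply/existsP/idP => [[z /andP[/eqP/val_inj -> //]]|h]; by exists x; rewrite eqxx.
Qed.

Lemma sum_b_le (b : nat -> bool) x y : \sum_(x <= z < y) (b z : nat) <= y - x.
Proof.
rewrite -[y - x]muln1 -sum_nat_const_nat; apply: leq_sum => z _; by case: (b z).
Qed.

Lemma gT_split n (T : {set 'I_n}) x y : x <= y ->
  gT T y = gT T x + \sum_(x <= z < y) ~~ memT T z.
Proof. by move=> h; rewrite /gT (@big_cat_nat _ _ _ x 0 y _ _ (leq0n x) h). Qed.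

Lemma gT_mono n (T : {set 'I_n}) x y : x <= y -> gT T x <= gT T y.
Proof. by move=> h; rewrite (gT_split T h) leq_addr. Qed.

Lemma gT_step n (T : {set 'I_n}) (x : 'I_n) y : x \in T -> x < y ->
  gT T y + 1 <= gT T x + (y - x).
Proof.
move=> xT xy; rewrite (gT_split T (ltnW xy)) big_ltn // memT_ord xT /= add0n.
have := sum_b_le (fun z => ~~ memT T z) x.+1 y; lia.
Qed.

Lemma sum_split n (T : {set 'I_n}) x :
  \sum_(0 <= z < x) (memT T z : nat) + gT T x = x.
Proof.
rewrite /gT -big_split /= -[x in _ = x]subn0 -[x - 0]muln1 -sum_nat_const_nat.
by apply: eq_bigr => z _; case: (memT T z).
Qed.

Lemma cardT_sum n (T : {set 'I_n}) : #|T| = \sum_(0 <= z < n) (memT T z : nat).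
Proof.
rewrite big_mkord -sum1_card big_mkcond /=; apply: eq_bigr => z _.
by rewrite memT_ord; case: (z \in T).
Qed.

Lemma gT_card n (T : {set 'I_n}) (x : 'I_n) : x \in T -> x - gT T x + 1 <= #|T|.
Proof.
move=> xT; rewrite cardT_sum.
have hx : (x <= n)%N by apply: ltnW.
rewrite (@big_cat_nat _ _ _ x 0 n _ _ (leq0n x) hx) /= (big_ltn (ltn_ord x)) memT_ord xT.
have := sum_split T x; lia.
Qed.

Lemma gT_le n (T : {set 'I_n}) x : gT T x <= x.
Proof. have := sum_split T x; lia. Qed.

Lemma chain_arith (x y gx gy d K r n a b : nat) : 0 < r ->
  n = K * r + d -> y < n -> x < y -> gx <= gy -> gy + 1 <= gx + (y - x) ->
  gy <= y -> gx <= x -> (y - gy + 1 <= K * r \/ d <= gy) ->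
  a = x - minn gx d -> b = y - minn gy d -> a %% r = b %% r ->
  r <= y - x /\ r <= x + n - y.
Proof.
move=> r0 hn hy xy h1 h2 h4 h5 h3 ea0 eb0 hm.
have hab : a < b by lia.
have hba : b - a <= y - x by lia.
have hbK : b < K * r by lia.
have ha : a <= x by lia.
have hb : y <= b + d by lia.
have ea := divn_eq a r; have eb := divn_eq b r.
rewrite hm in ea.
move: ea eb; move: (a %/ r) (b %/ r) (b %% r) => qa qb m ea eb.
have hq : qa < qb by rewrite -(ltn_pmul2r r0); lia.
have hqK : qb < K by rewrite -(ltn_pmul2r r0); lia.
have e1 : b - a = (qb - qa) * r by rewrite mulnBl; lia.
have f1 : r <= (qb - qa) * r by rewrite leq_pmull // subn_gt0.
have f2 : (qb - qa) * r <= (K - 1) * r by rewrite leq_mul2r; apply/orP; right; lia.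
have f3 : (K - 1) * r = K * r - r by rewrite mulnBl mul1n.
clear -hba hbK ha hb e1 f1 f2 f3 hn hy xy.
split; lia.
Qed.

Lemma class_chain n r (T : {set 'I_n}) : 0 < r -> #|T| <= n %/ r * r ->
  forall x y : 'I_n, x \in T -> y \in T -> x < y ->
  phiT (n %% r) T x %% r = phiT (n %% r) T y %% r ->
  r <= y - x /\ r <= x + n - y.
Proof.
move=> r0 hT x y xT yT xy hm.
have h3 := gT_card yT.
apply: (chain_arith (gx := gT T x) (gy := gT T y) (d := n %% r) (K := n %/ r)
  (a := phiT (n %% r) T x) (b := phiT (n %% r) T y)) => //.
- exact: divn_eq.
- exact: gT_mono (ltnW xy).
- exact: gT_step.
- exact: gT_le.
- exact: gT_le.
- lia.
Qed.

Definition chain n r (C : {set 'I_n}) : Prop := forall x y : 'I_n,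
  x \in C -> y \in C -> x < y -> r <= y - x /\ r <= x + n - y.

Definition cls n r (T : {set 'I_n}) (c : nat) : {set 'I_n} :=
  [set x in T | phiT (n %% r) T x %% r == c].

Lemma cls_chain n r (T : {set 'I_n}) c : 0 < r -> #|T| <= n %/ r * r -> chain r (cls r T c).
Proof.
move=> r0 hT x y; rewrite !inE => /andP[xT /eqP hx] /andP[yT /eqP hy] xy.
exact: (class_chain r0 hT xT yT xy (etrans hx (esym hy))).
Qed.

Lemma cls_sub n r (T : {set 'I_n}) c : cls r T c \subset T.
Proof. by apply/subsetP => x; rewrite inE => /andP[]. Qed.

Lemma card_cls n r (T : {set 'I_n}) (r0 : 0 < r) :
  #|T| = \sum_(j < r) #|cls r T j|.
Proof.
rewrite -sum1_card (partition_big (fun i : 'I_n => Ordinal (ltn_pmod (phiT (n %% r) T i) r0)) xpredT) //=.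
apply: eq_bigr => j _; rewrite -sum1_card; apply: eq_bigl => i.
by rewrite inE -val_eqE.
Qed.

Lemma all_eqK r (a : 'I_r -> nat) K : (forall j, a j <= K) ->
  \sum_(j < r) a j = r * K -> forall j, a j = K.
Proof.
move=> hle hs j.
have h0 : \sum_(k < r) (K - a k) == 0.
  by rewrite sumnB // hs sum_nat_const card_ord mulnC subnn.
rewrite sum_nat_eq0 in h0; have := forallP h0 j; rewrite subn_eq0 => h.
by move: h; rewrite implyTb => h; apply/eqP; rewrite eqn_leq h hle.
Qed.

Lemma subset_card (T : finType) (S : {set T}) i k : i \in S -> 0 < k -> k <= #|S| ->
  exists U : {set T}, [/\ i \in U, U \subset S & #|U| = k].
Proof.
move=> iS k0 kS; move: {2}#|S| (erefl #|S|) kS => m.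
elim: m S iS => [|m IH] S iS hm km.
  by lia.
case: (leqP k m) => hk; last first.
  by exists S; split => //; lia.
have : 0 < #|S :\ i| by rewrite (cardsD1 i S) iS in hm; lia.
case/card_gt0P => j; rewrite !inE => /andP[ji jS].
have hc : #|S :\ j| = m by rewrite (cardsD1 j S) jS in hm; lia.
have [||U [h1 h2 h3]] := IH (S :\ j) _ hc.
- by rewrite !inE iS eq_sym ji.
- by rewrite hc.
exists U; split => //; apply: subset_trans h2 _; exact: subsetDl.
Qed.

Lemma core (R : realFieldType) n r (S : {set 'I_n}) (w : 'I_n -> R) :
  0 < r -> r <= n ->
  (forall C : {set 'I_n}, C \subset S -> chain r C -> #|C| * r <= n) ->
  (forall (C : {set 'I_n}) i, C \subset S -> chain r C -> i \in C -> (w i <= (#|C|%:R)^-1)%R) ->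
  (forall (C : {set 'I_n}) i, C \subset S -> chain r C -> i \in C -> #|C| = n %/ r ->
     (w i <= r%:R / n%:R)%R) ->
  (\sum_(i in S) w i <= r%:R)%R.
Proof.
move=> r0 rn Hc H1 H2.
have n0 : 0 < n by lia.
case: (leqP #|S| (n %/ r * r)) => hS.
- rewrite (partition_big (fun i : 'I_n => Ordinal (ltn_pmod (phiT (n %% r) S i) r0)) xpredT) //=.
  have -> : (r%:R = \sum_(j < r) (1 : R))%R by rewrite sumr_const card_ord.
  apply: ler_sum => j _.
  have -> : (\sum_(i | (i \in S) && (Ordinal (ltn_pmod (phiT (n %% r) S i) r0) == j)) w i
      = \sum_(i in cls r S j) w i)%R.
    by apply: eq_bigl => i; rewrite inE -val_eqE.
  have hch : chain r (cls r S j) by apply: cls_chain.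
  have hsub : cls r S j \subset S by apply: cls_sub.
  apply: (@le_trans _ _ (\sum_(i in cls r S j) (#|cls r S j|%:R)^-1)%R).
    by apply: ler_sum => i hi; apply: H1.
  rewrite sumr_const.
  case: (posnP #|cls r S j|) => [->|hp]; first by rewrite mulr0n.
  by rewrite -(mulr_natr ((#|cls r S j|%:R)^-1)) mulVf // pnatr_eq0 -lt0n.
- have K0 : 0 < n %/ r by rewrite divn_gt0.
  have hw : forall i, i \in S -> (w i <= r%:R / n%:R)%R.
    move=> i iS.
    have [U [iU US cU]] : exists U : {set 'I_n}, [/\ i \in U, U \subset S & #|U| = n %/ r * r].
      by apply: subset_card => //; [rewrite muln_gt0 K0 | apply: ltnW].
    have hU : #|U| <= n %/ r * r by rewrite cU.
    set j0 := phiT (n %% r) U i %% r.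
    have hj0 : j0 < r by apply: ltn_pmod.
    apply: (H2 (cls r U j0)).
    + exact: subset_trans (cls_sub r U j0) US.
    + exact: cls_chain.
    + by rewrite inE iU eqxx.
    + have := @all_eqK r (fun j => #|cls r U j|) (n %/ r).
      move=> /(_ _ _ (Ordinal hj0)) /= -> //.
      * move=> j; rewrite leq_divRL //; apply: Hc; last exact: cls_chain.
        exact: subset_trans (cls_sub r U j) US.
      * by rewrite mulnC -cU (card_cls U r0).
  apply: (@le_trans _ _ (\sum_(i in S) (r%:R / n%:R : R))%R); first exact: ler_sum.
  rewrite sumr_const -(mulr_natr (r%:R / n%:R)).
  have hSn : #|S| <= n by rewrite -[n in _ <= n]card_ord max_card.
  rewrite mulrAC ler_pdivrMr ?ltr0n // -!natrM ler_nat mulnC.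
  by rewrite mulnC leq_mul2l hSn orbT.
Qed.

Definition rotf n (n0 : 0 < n) (i x : 'I_n) : 'I_n := Ordinal (ltn_pmod (x + i) n0).
Lemma rotf_inj n (n0 : 0 < n) i : injective (rotf n0 i).
Proof.
move=> x y /(congr1 val) /= /eqP; rewrite eqn_modDr !modn_small // => /eqP; exact: val_inj.
Qed.
Definition rot n (n0 : 0 < n) i : {perm 'I_n} := perm (@rotf_inj n n0 i).
Definition arc0 n r : {set 'I_n} := [set x : 'I_n | x < r].
Definition arc n (n0 : 0 < n) r i : {set 'I_n} := rot n0 i @: arc0 n r.

Lemma card_arc0 n r : r <= n -> #|arc0 n r| = r.
Proof.
move=> rn.
have -> : arc0 n r = [set widen_ord rn x | x : 'I_r].
  apply/setP => y; rewrite inE; apply/idP/imsetP => [yr|[x _ ->]] //=.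
  by exists (Ordinal yr) => //; apply: val_inj.
by rewrite card_imset ?card_ord //; by move=> a b /(congr1 val) /= /val_inj.
Qed.

Lemma card_arc n (n0 : 0 < n) r i : r <= n -> #|arc n0 r i| = r.
Proof. by move=> rn; rewrite card_imset ?card_arc0 //; exact: perm_inj. Qed.

Lemma modn2 a n : 0 < n -> a < n + n -> a %% n = (if a < n then a else a - n).
Proof.
move=> n0 h; case: ifP => h1; first by rewrite modn_small.
have -> : a = (a - n) + n by lia.
by rewrite modnDr modn_small; lia.
Qed.

Lemma disjI (T : finType) (A B : {set T}) :
  (forall x, x \in A -> x \in B -> False) -> [disjoint A & B].
Proof.
move=> h; rewrite -setI_eq0; apply/eqP/setP => x; rewrite !inE.
by apply/negbTE/negP => /andP[ha hb]; apply: (h x).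
Qed.

Lemma disjE (T : finType) (A B : {set T}) x :
  [disjoint A & B] -> x \in A -> x \in B -> False.
Proof.
by rewrite -setI_eq0 => /eqP/setP/(_ x); rewrite !inE => + ha hb; rewrite ha hb.
Qed.

Lemma arc_disj n (n0 : 0 < n) r (i j : 'I_n) : i < j -> r <= j - i -> r <= i + n - j ->
  [disjoint arc n0 r i & arc n0 r j].
Proof.
move=> ij h1 h2; apply: disjI => y /imsetP[x hx ->] /imsetP[x' hx' /(congr1 val)].
rewrite !permE /= !modn2 //; move: hx hx'; rewrite !inE => hx hx'.
- have := ltn_ord i; have := ltn_ord j; have := ltn_ord x; have := ltn_ord x'.
  by case: ifP; case: ifP; lia.
- have := ltn_ord j; have := ltn_ord x'; lia.
- have := ltn_ord i; have := ltn_ord x; lia.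
Qed.

Lemma disj_imset (T : finType) (f : T -> T) (A B : {set T}) : injective f ->
  [disjoint A & B] -> [disjoint f @: A & f @: B].
Proof.
move=> fi h; apply: disjI => y /imsetP[a ha ->] /imsetP[b hb /fi e].
by subst; apply: (disjE h ha hb).
Qed.

Lemma matching_triv n (M : {set {set 'I_n}}) : is_matching M -> trivIset M.
Proof.
move=> /forallP h; apply/trivIsetP => A B hA hB neq.
by have := h A; rewrite hA /= => /forallP/(_ B); rewrite hB neq.
Qed.

Lemma matching_card n r (M : {set {set 'I_n}}) : is_matching M ->
  (forall B, B \in M -> #|B| = r) -> #|M| * r <= n.
Proof.
move=> /matching_triv /eqP h hr.
rewrite -sum_nat_const (eq_bigr _ (fun B hB => esym (hr B hB))) h.
by rewrite -[n in _ <= n]card_ord max_card.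
Qed.

Lemma mweight_ge (R : realFieldType) n r (F : {set {set 'I_n}}) A (M : {set {set 'I_n}}) :
  0 < r -> M \subset F -> is_matching M -> A \in M -> (forall B, B \in M -> #|B| = r) ->
  (#|M|%:R <= mweight R n r F A)%R.
Proof.
move=> r0 MF mM AM hr; rewrite /mweight; case: ifP => _.
  by rewrite ler_pdivlMr ?ltr0n // -natrM ler_nat; apply: matching_card.
rewrite ler_nat /max_matching_containing.
by apply: (@leq_bigmax_cond _ _ _ M); rewrite powersetE MF mM AM.
Qed.

Lemma mweight_K (R : realFieldType) n r (F : {set {set 'I_n}}) A (M : {set {set 'I_n}}) :
  M \subset F -> is_matching M -> A \in M -> #|M| = n %/ r ->
  mweight R n r F A = (n%:R / r%:R)%R.
Proof.
move=> MF mM AM hK; rewrite /mweight ifT //.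
by apply/existsP; exists M; rewrite powersetE MF mM AM hK eqxx.
Qed.

Definition Wt (R : realFieldType) n r (F : {set {set 'I_n}}) (B : {set 'I_n}) : R :=
  if B \in F then ((mweight R n r F B)^-1)%R else 0%R.

Section PB.
Variables (R : realFieldType) (n r : nat) (F : {set {set 'I_n}}).
Hypothesis hF : forall A, A \in F -> #|A| = r.
Hypotheses (n0 : 0 < n) (r0 : 0 < r) (rn : r <= n).
Variable p : {perm 'I_n}.

Let B j := p @: arc n0 r j.

Lemma cardB j : #|B j| = r.
Proof. by rewrite /B card_imset ?card_arc //; exact: perm_inj. Qed.

Lemma chain_disjB (C : {set 'I_n}) : chain r C -> forall j j', j \in C -> j' \in C -> j != j' ->
  [disjoint B j & B j'].
Proof.
move=> hch j j' hj hj' neq; rewrite /B; apply: disj_imset; first exact: perm_inj.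
case: (ltngtP j j') => h.
- by have [h1 h2] := hch _ _ hj hj' h; apply: arc_disj.
- by have [h1 h2] := hch _ _ hj' hj h; rewrite disjoint_sym; apply: arc_disj.
- by move: neq; rewrite (val_inj h) eqxx.
Qed.

Lemma B_inj (C : {set 'I_n}) : chain r C -> {in C &, injective B}.
Proof.
move=> hch j j' hj hj' e; apply/eqP; apply/negPn/negP => neq.
have := chain_disjB hch hj hj' neq; rewrite e.
have : 0 < #|B j'| by rewrite cardB.
by case/card_gt0P => x hx /disjE /(_ hx hx).
Qed.

Lemma matchB (C : {set 'I_n}) : chain r C -> is_matching [set B j | j in C].
Proof.
move=> hch; apply/forallP => X; apply/implyP => /imsetP[j hj ->].
apply/forallP => Y; apply/implyP => /imsetP[j' hj' ->]; apply/implyP => neq.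
apply: (chain_disjB hch hj hj'); apply/eqP => e; by move: neq; rewrite e eqxx.
Qed.

Lemma cardMB (C : {set 'I_n}) : chain r C -> #|[set B j | j in C]| = #|C|.
Proof. by move=> hch; rewrite card_in_imset //; exact: B_inj. Qed.

Lemma subMB (C : {set 'I_n}) : C \subset [set i | B i \in F] -> [set B j | j in C] \subset F.
Proof.
move=> /subsetP h; apply/subsetP => X /imsetP[j hj ->].
by have := h j hj; rewrite inE.
Qed.

Lemma cardMBr (C : {set 'I_n}) X : X \in [set B j | j in C] -> #|X| = r.
Proof. by case/imsetP => j _ ->; exact: cardB. Qed.

Lemma perm_bound : (\sum_(i < n) Wt R r F (B i) <= r%:R)%R.
Proof.
set S := [set i : 'I_n | B i \in F].
have -> : (\sum_(i < n) Wt R r F (B i) = \sum_(i in S) ((mweight R n r F (B i))^-1)%R)%R.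
  by rewrite [RHS]big_mkcond; apply: eq_bigr => i _; rewrite inE /Wt.
apply: core => //.
- move=> C hCS hch; rewrite -(cardMB hch); apply: matching_card; first exact: matchB.
  exact: cardMBr.
- move=> C i hCS hch hi.
  have hm := @mweight_ge R _ _ _ _ _ r0 (subMB hCS) (matchB hch) (imset_f B hi) (@cardMBr C).
  rewrite (cardMB hch) in hm.
  have hC : (0 < #|C|%:R :> R)%R by rewrite ltr0n; apply/card_gt0P; exists i.
  by rewrite lef_pV2 // posrE; apply: lt_le_trans hm.
- move=> C i hCS hch hi hK.
  rewrite (@mweight_K R _ _ _ _ _ (subMB hCS) (matchB hch) (imset_f B hi)) ?(cardMB hch) //.
  by rewrite invf_div.
Qed.
End PB.

Lemma tau_exists (T : finType) (A B : {set T}) : #|A| = #|B| ->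
  exists tau : {perm T}, tau @: A = B.
Proof.
move=> hAB.
pose sA := enum A ++ enum (~: A); pose sB := enum B ++ enum (~: B).
have usA : uniq sA by rewrite cat_uniq !enum_uniq /= andbT; apply/hasPn => x; rewrite !mem_enum inE => ->.
have usB : uniq sB by rewrite cat_uniq !enum_uniq /= andbT; apply/hasPn => x; rewrite !mem_enum inE => ->.
have szA : size sA = #|T| by rewrite size_cat -!cardE cardsC.
have szB : size sB = #|T| by rewrite size_cat -!cardE cardsC.
have inA : forall x, x \in sA by move=> x; rewrite mem_cat !mem_enum inE orbN.
pose f x := nth x sB (index x sA).
have f_inj : injective f.
  move=> x y; rewrite /f => e.
  have ix : index x sA < size sB by rewrite szB -szA index_mem.
  have iy : index y sA < size sB by rewrite szB -szA index_mem.
  move: e; rewrite (set_nth_default y) // => /eqP; rewrite nth_uniq // => /eqP e.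
  by rewrite -(nth_index x (inA x)) e (set_nth_default x) ?nth_index // index_mem.
exists (perm f_inj).
apply/eqP; rewrite eqEcard card_imset ?hAB ?leqnn ?andbT; last exact: perm_inj.
apply/subsetP => y /imsetP[x xA ->]; rewrite permE /f.
have hx : x \in enum A by rewrite mem_enum.
rewrite /sA index_cat hx nth_cat.
have : index x (enum A) < size (enum B) by rewrite -!cardE -hAB cardE index_mem.
by move=> h; rewrite h -(mem_enum B); apply: mem_nth.
Qed.

Section Main.
Variables (R : realFieldType) (n r : nat) (F : {set {set 'I_n}}).
Hypothesis hF : forall A, A \in F -> #|A| = r.
Hypotheses (n0 : 0 < n) (r0 : 0 < r) (rn : r <= n).

Definition NN (A : {set 'I_n}) := #|[pred p : {perm 'I_n} | p @: arc0 n r == A]|.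

Lemma arc_rot i (p : {perm 'I_n}) : p @: arc n0 r i = (rot n0 i * p)%g @: arc0 n r.
Proof. by rewrite /arc -imset_comp; apply: eq_imset => x; rewrite permM. Qed.

Lemma sum_rot i : (\sum_(p : {perm 'I_n}) Wt R r F (p @: arc n0 r i) =
   \sum_(p : {perm 'I_n}) Wt R r F (p @: arc0 n r))%R.
Proof.
rewrite [RHS](reindex_inj (mulgI (rot n0 i))).
by apply: eq_bigr => p _; rewrite arc_rot.
Qed.

Lemma NN_const (A : {set 'I_n}) : #|A| = r -> NN A = NN (arc0 n r).
Proof.
move=> hA; have [tau htau] := tau_exists (esym (etrans hA (esym (card_arc0 rn)))).
rewrite /NN -!sum1_card (reindex_inj (mulIg tau)) /=; apply: eq_bigl => p.
rewrite !inE -htau.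
have -> : [set (p * tau)%g x | x in arc0 n r] = tau @: (p @: arc0 n r).
  by rewrite -imset_comp; apply: eq_imset => x; rewrite permM.
by rewrite (inj_eq (imset_inj (@perm_inj _ tau))).
Qed.

Lemma NN_other (A : {set 'I_n}) : #|A| != r -> NN A = 0.
Proof.
move=> h; apply: eq_card0 => p; rewrite inE; apply/negbTE; apply: contra h => /eqP <-.
by rewrite card_imset ?card_arc0 //; exact: perm_inj.
Qed.

Lemma count_N0 : NN (arc0 n r) * 'C(n, r) = n`!.
Proof.
have e1 : \sum_(p : {perm 'I_n}) 1 = n`! by rewrite sum1_card card_Sn.
rewrite -e1 (partition_big (fun p : {perm 'I_n} => p @: arc0 n r) xpredT) //=.
have -> : \sum_(A : {set 'I_n}) \sum_(p : {perm 'I_n} | p @: arc0 n r == A) 1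
    = \sum_(A : {set 'I_n}) (if #|A| == r then NN (arc0 n r) else 0).
  apply: eq_bigr => A _; rewrite sum1_card.
  case: ifP => h; first by rewrite -(NN_const (eqP h)).
  by rewrite -(NN_other (negbT h)).
rewrite -big_mkcond sum_nat_const mulnC; congr (_ * _).
by rewrite -[n in 'C(n, _)]card_ord -card_draws cardsE.
Qed.

End Main.

Unset Implicit Arguments. Set Strict Implicit. Set Printing Implicit Defensive.
Local Open Scope ring_scope.
Theorem theorem5 (R : realFieldType) (n r : nat) (hr1 : (1 <= r)%N) (hrn : (r <= n)%N)
  (F : {set {set 'I_n}}) (hF : forall A, A \in F -> #|A| = r) :
  (\sum_(A in F) (mweight R n r F A)^-1 <= ('C(n.-1, r.-1))%:R)%R.
Proof.
have n0 : (0 < n)%N by lia.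
set X := (\sum_(A in F) (mweight R n r F A)^-1)%R.
have eX : X = (\sum_(A : {set 'I_n}) Wt R r F A)%R.
  by rewrite /X big_mkcond.
set N0 := NN r (arc0 n r).
pose L := (\sum_(p : {perm 'I_n}) \sum_(i < n) Wt R r F (p @: arc n0 r i))%R.
have hL1 : (L <= r%:R *+ n`!)%R.
  rewrite /L -card_Sn -sumr_const; apply: ler_sum => p _.
  exact: perm_bound.
have hL2 : L = (X *+ N0 *+ n)%R.
  rewrite /L exchange_big /=.
  rewrite (eq_bigr (fun _ => \sum_(p : {perm 'I_n}) Wt R r F (p @: arc0 n r))%R);
    last by move=> i _; apply: sum_rot.
  rewrite sumr_const card_ord; congr (_ *+ _).
  rewrite (partition_big (fun p : {perm 'I_n} => p @: arc0 n r) xpredT) //= eX -sumrMnl.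
  apply: eq_bigr => A _.
  rewrite (eq_bigr (fun _ => Wt R r F A)); last by move=> p /eqP ->.
  rewrite sumr_const.
  case: (boolP (A \in F)) => hA; last by rewrite /Wt (negbTE hA) !mul0rn.
  congr (_ *+ _); transitivity (NN r A); first by apply: eq_card.
  exact: (NN_const hrn (hF A hA)).
have hC := mul_bin_diag n r.-1; rewrite prednK // in hC.
have hcount := count_N0 hrn.
rewrite -/N0 in hcount.
have N0pos : (0 < N0)%N.
  rewrite /N0 /NN; apply/card_gt0P; exists 1%g; rewrite inE; apply/eqP; apply/setP => x.
  by apply/imsetP/idP => [[y hy ->]|hx]; [rewrite perm1 | exists x; rewrite ?perm1].
have e2 : (r * n`! = (N0 * n) * 'C(n.-1, r.-1))%N.
  by rewrite -hcount mulnCA -hC mulnA.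
move: hL1; rewrite hL2 -mulrnA -(mulr_natr X) -(mulr_natr (r%:R : R)) -natrM e2 (natrM R (N0 * n)%N).
rewrite [X * _]mulrC ler_pM2l // ltr0n muln_gt0 N0pos n0 //=.
Qed.
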